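(* Let $G=(V,E)$ be a finite connected multigraph, $\mathscr H$ its exchange graph, $\mathscr H_0$ a connected component of $\mathscr H$ with vertex set $\mathscr V_0$, and $G_0$ the spanning subgraph of $G$ associated to $\mathscr H_0$. Let $X\subseteq V$ be saturated with respect to $G_0$. Then for every vertex $(A,B)\in\mathscr V_0$, the induced subgraphs $A[X]$ and $B[X]$ are edge-disjoint trees with vertex set $X$.
   Context: A spanning tree of $G$ is a subgraph with vertex set $V$ that is a tree; a spanning 2-forest is a subgraph with vertex set $V$, without cycles, with exactly two connected components. $\mathcal{ST}(G)$ and $\mathcal{SF}_2(G)$ denote the sets of these. For a spanning subgraph $G'$ and an edge $e\notin E(G')$, $G'+e$ is the spanning subgraph with edge set $E(G')\cup\{e\}$; for $e\in E(G')$, $G'-e$ has edge set $E(G')\setminus\{e\}$. The exchange graph $\mathscr H$ of $G$ is the bipartite graph with vertex set $\mathscr V_1\sqcup\mathscr V_2$, where $\mathscr V_1=\{(F,T): F\in\mathcal{SF}_2(G),T\in\mathcal{ST}(G),E(F)\cap E(T)=\emptyset\}$ and $\mathscr V_2=\{(T,F):T\in\mathcal{ST}(G),F\in\mathcal{SF}_2(G),E(F)\cap E(T)=\emptyset\}$; $(F,T)\in\mathscr V_1$ is adjacent to $(T',F')\in\mathscr V_2$ iff there is an edge $e\in E(T)$ with $F'=T-e$ and $T'=F+e$. For a connected component $\mathscr H_0$ of $\mathscr H$, the set $E(A)\cup E(B)$ is the same for all vertices $(A,B)$ of $\mathscr H_0$; the associated spanning subgraph $G_0$ is the spanning subgraph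 of $G$ with this edge set. For $X\subseteq V$ and a (spanning) subgraph $K$, $K[X]$ denotes the induced subgraph on $X$ (vertex set $X$, edges of $K$ with both endpoints in $X$). A subset $X\subseteq V$ is saturated with respect to $G_0$ if $G_0[X]$ has exactly $2|X|-2$ edges. *)

(* Defs.v *)
From mathcomp Require Import all_boot.
Set Implicit Arguments. Unset Strict Implicit. Unset Printing Implicit Defensive.

(* A finite multigraph G = (V, E) is given by finite types of vertices V and
   edges E and an endpoint map [ends : E -> V * V] (parallel edges and loops
   allowed). A spanning subgraph is represented by its edge set {set E}. *)

Section Graphs.
Variables (V E : finType) (ends : E -> V * V).

Definition adj (S : {set E}) : rel V :=
  fun x y => [exists e in S,
    (((ends e).1 == x) && ((ends e).2 == y)) ||
    (((ends e).1 == y) && ((ends e).2 == x))].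

(* S has no cycle: no edge of S (loops included) has its endpoints connected
   in S minus that edge *)
Definition acyclic (S : {set E}) : bool :=
  [forall e in S, ~~ connect (adj (S :\ e)) (ends e).1 (ends e).2].

Definition connected_on (X : {set V}) (S : {set E}) : bool :=
  [forall x in X, [forall y in X, connect (adj S) x y]].

Definition edges_within (X : {set V}) (S : {set E}) : bool :=
  [forall e in S, ((ends e).1 \in X) && ((ends e).2 \in X)].

Definition is_tree_on (X : {set V}) (S : {set E}) : bool :=
  [&& X != set0, edges_within X S, connected_on X S & acyclic S].

Definition is_spanning_tree (S : {set E}) : bool := is_tree_on [set: V] S.

Definition ncomp (S : {set E}) : nat :=
  #|[set [set y | connect (adj S) x y] | x : V]|.

Definition is_spanning_2forest (S : {set E}) : bool :=
  acyclic S && (ncomp S == 2).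

Definition graph_connected : bool := connected_on [set: V] [set: E].

Definition induced (X : {set V}) (K : {set E}) : {set E} :=
  [set e in K | ((ends e).1 \in X) && ((ends e).2 \in X)].

(* Exchange graph. A vertex is tagged: (false, (F, T)) is (F,T) in V_1,
   (true, (T, F)) is (T,F) in V_2. *)
Definition hvert := (bool * ({set E} * {set E}))%type.

Definition hvalid (u : hvert) : bool :=
  let: (s, (P, Q)) := u in
  [&& (if s then is_spanning_tree P && is_spanning_2forest Q
            else is_spanning_2forest P && is_spanning_tree Q)
    & [disjoint P & Q]].

Definition hstep (FT T'F' : {set E} * {set E}) : bool :=
  let: (F, T) := FT in let: (T', F') := T'F' in
  [exists e in T, (F' == T :\ e) && (T' == e |: F)].

Definition hadj : rel hvert :=
  fun u w => [&& hvalid u, hvalid w &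
     ((~~ u.1) && w.1 && hstep u.2 w.2) || (u.1 && ~~ w.1 && hstep w.2 u.2)].

(* edge set of the spanning subgraph associated to the component of u:
   E(A) ∪ E(B) for (A,B) = u (independent of the chosen vertex of the
   component) *)
Definition assoc_edges (u : hvert) : {set E} := u.2.1 :|: u.2.2.

(* X saturated w.r.t. G0 (edge set S0): G0[X] has exactly 2|X| - 2 edges
   (integer subtraction, written without truncation) *)
Definition saturated (S0 : {set E}) (X : {set V}) : bool :=
  #|induced X S0| + 2 == 2 * #|X|.

End Graphs.

(* Main.v *)
Require Import Defs.
From mathcomp Require Import all_boot.
From mathcomp Require Import zify.
Set Implicit Arguments. Unset Strict Implicit. Unset Printing Implicit Defensive.

Lemma adj_sym (V E : finType) (ends : E -> V * V) S : symmetric (adj ends S).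
Proof.
by move=> x y; rewrite /adj; apply/existsP/existsP => -[e He]; exists e; move: He; rewrite orbC.
Qed.

Lemma conn_sym (V E : finType) (ends : E -> V * V) S x y :
  connect (adj ends S) x y = connect (adj ends S) y x.
Proof. by apply: sym_connect_sym; apply: adj_sym. Qed.

Lemma adj_sub (V E : finType) (ends : E -> V * V) (A B : {set E}) :
  A \subset B -> forall x y, adj ends A x y -> adj ends B x y.
Proof.
move=> sAB x y /existsP[e /andP[eA H]]; apply/existsP; exists e.
by rewrite (subsetP sAB).
Qed.

Lemma connect_mono (V E : finType) (ends : E -> V * V) (A B : {set E}) :
  A \subset B -> forall x y, connect (adj ends A) x y -> connect (adj ends B) x y.
Proof. by move=> sAB; apply: connect_sub => x y /(adj_sub sAB); apply: connect1. Qed.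

Lemma acyclic_sub (V E : finType) (ends : E -> V * V) (A B : {set E}) :
  A \subset B -> acyclic ends B -> acyclic ends A.
Proof.
move=> sAB /forallP acB; apply/forallP => e; apply/implyP => eA.
have := acB e; rewrite (subsetP sAB) //=; apply: contra; apply: connect_mono.
exact: setSD.
Qed.

Lemma edge_conn (V E : finType) (ends : E -> V * V) (T : {set E}) f :
  f \in T -> connect (adj ends T) (ends f).1 (ends f).2.
Proof. by move=> fT; apply: connect1; apply/existsP; exists f; rewrite fT !eqxx. Qed.

Lemma comp_closed (V E : finType) (ends : E -> V * V) (X : {set V}) (T : {set E}) a f :
  f \in T -> (ends f).1 \in X -> (ends f).2 \in X ->
  ((ends f).1 \in [set v in X | connect (adj ends T) a v]) =
  ((ends f).2 \in [set v in X | connect (adj ends T) a v]).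
Proof.
move=> fT h1 h2; rewrite !inE h1 h2 /=.
have c12 := edge_conn ends fT.
have c21 : connect (adj ends T) (ends f).2 (ends f).1 by rewrite conn_sym.
apply/idP/idP => H; [exact: connect_trans H c12 | exact: connect_trans H c21].
Qed.

Lemma split_gen (V E : finType) (ends : E -> V * V) (X : {set V}) (S : {set E}) a b :
  (forall (Y : {set V}) (S' : {set E}), #|Y| < #|X| -> Y != set0 ->
     edges_within ends Y S' -> acyclic ends S' -> #|S'| < #|Y|) ->
  edges_within ends X S -> acyclic ends S -> a \in X -> b \in X ->
  ~~ connect (adj ends S) a b -> #|S| + 2 <= #|X|.
Proof.
move=> IH /forallP wS acS aX bX nab.
set C := [set v in X | connect (adj ends S) a v].
set P := [set f | (ends f).1 \in C].
have wS' f : f \in S -> ((ends f).1 \in X) && ((ends f).2 \in X).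
  by move=> fS; have := wS f; rewrite fS.
have cl f : f \in S -> ((ends f).1 \in C) = ((ends f).2 \in C).
  by move=> fS; case/andP: (wS' f fS) => h1 h2; apply: comp_closed.
have aC : a \in C by rewrite inE aX connect0.
have bC : b \notin C by rewrite inE bX.
have CX : C \subset X by apply/subsetP => v; rewrite inE => /andP[].
have XC : #|X :&: C| + #|X :\: C| = #|X| := cardsID C X.
rewrite (setIidPr CX) in XC.
have Pin f : (f \in P) = ((ends f).1 \in C) by rewrite inE.
clearbody P C.
have SP := cardsID P S.
have h1 : #|S :&: P| < #|C|.
  apply: IH.
  - by apply: proper_card; apply/properP; split => //; exists b.
  - by apply/set0Pn; exists a.
  - apply/forallP => f; apply/implyP; rewrite !inE => /andP[fS f1].
    by rewrite Pin in f1; rewrite f1 -cl // f1.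
  - by apply: acyclic_sub acS; apply: subsetIl.
have h2 : #|S :\: P| < #|X :\: C|.
  apply: IH.
  - apply: proper_card; apply/properP; split; first exact: subsetDl.
    by exists a => //; rewrite inE aC.
  - by apply/set0Pn; exists b; rewrite inE bC.
  - apply/forallP => f; apply/implyP; rewrite !inE Pin => /andP[f1 fS].
    case/andP: (wS' f fS) => -> ->; rewrite -cl //.
    by move: f1 => ->.
  - by apply: acyclic_sub acS; apply: subsetDl.
lia.
Qed.

Lemma acyclic_bound (V E : finType) (ends : E -> V * V) n :
  forall (X : {set V}) (S : {set E}), #|X| <= n -> X != set0 ->
  edges_within ends X S -> acyclic ends S -> #|S| < #|X|.
Proof.
elim: n => [|n IHn] X S Xn X0 wS acS.
  by move: X0; rewrite -card_gt0; lia.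
have [S0|/set0Pn[e eS]] := eqVneq S set0.
  by rewrite S0 cards0 card_gt0.
have := forallP wS e; rewrite eS /= => /andP[aX bX].
have acT : acyclic ends (S :\ e) by apply: acyclic_sub acS; apply: subsetDl.
have wT : edges_within ends X (S :\ e).
  apply/forallP => f; apply/implyP; rewrite !inE => /andP[_ fS].
  by have := forallP wS f; rewrite fS.
have nab : ~~ connect (adj ends (S :\ e)) (ends e).1 (ends e).2.
  by have := forallP acS e; rewrite eS.
have := split_gen (fun Y S' hY => IHn Y S' (leq_trans hY Xn)) wT acT aX bX nab.
by rewrite (cardsD1 e S) eS; lia.
Qed.

Lemma acyclic_conn (V E : finType) (ends : E -> V * V) (X : {set V}) (S : {set E}) :
  edges_within ends X S -> acyclic ends S -> #|S|.+1 = #|X| -> connected_on ends X S.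
Proof.
move=> wS acS hS; apply/forallP => x; apply/implyP => xX; apply/forallP => y.
apply/implyP => yX; apply/negPn/negP => nxy.
have := split_gen (fun Y S' _ => acyclic_bound (leqnn _)) wS acS xX yX nxy.
lia.
Qed.

Lemma step_union (E : finType) (F T F' T' : {set E}) :
  hstep (F, T) (T', F') -> T' :|: F' = F :|: T.
Proof.
case/existsP => e /andP[eT /andP[/eqP -> /eqP ->]].
apply/setP => x; rewrite !inE; case: (eqVneq x e) => [->|] //=.
by rewrite eT orbT.
Qed.

Lemma hadj_assoc (V E : finType) (ends : E -> V * V) u w :
  hadj ends u w -> assoc_edges w = assoc_edges u.
Proof.
case: u => s [P Q]; case: w => s' [P' Q'].
case/and3P => _ _ /orP[/andP[_ H]|/andP[_ H]]; rewrite /assoc_edges /=.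
  exact: step_union H.
by rewrite (step_union H).
Qed.

Lemma hvalid_acyc (V E : finType) (ends : E -> V * V) v :
  hvalid ends v -> [&& acyclic ends v.2.1, acyclic ends v.2.2 & [disjoint v.2.1 & v.2.2]].
Proof.
case: v => [[] [P Q]] /andP[H D] /=; rewrite D andbT;
  move: H; rewrite /is_spanning_tree /is_tree_on /is_spanning_2forest.
  by case/andP => /and4P[_ _ _ ->] /andP[-> _].
by case/andP => /andP[-> _] /and4P[_ _ _ ->].
Qed.

Lemma reach (V E : finType) (ends : E -> V * V) u0 v :
  connect (hadj ends) u0 v -> hvalid ends u0 ->
  hvalid ends v /\ assoc_edges v = assoc_edges u0.
Proof.
case/connectP => p pth ->; elim: p u0 pth => [|w p IH] u //= /andP[huw pth] hu.
have hw : hvalid ends w by case/and3P: huw.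
have [h1 h2] := IH w pth hw.
by split => //; rewrite h2; apply: hadj_assoc huw.
Qed.

Theorem lemma2p6 (V E : finType) (ends : E -> V * V) (u0 : hvert E)
    (X : {set V}) :
  graph_connected ends ->
  hvalid ends u0 ->
  saturated ends (assoc_edges u0) X ->
  forall v : hvert E, connect (hadj ends) u0 v ->
    [&& is_tree_on ends X (induced ends X v.2.1),
        is_tree_on ends X (induced ends X v.2.2) &
        [disjoint induced ends X v.2.1 & induced ends X v.2.2]].
Proof.
move=> _ hu0 sat v /reach/(_ hu0) [hv hA].
case/and3P: (hvalid_acyc hv) => acA acB dAB.
move: sat; rewrite /saturated => /eqP sat.
have X0 : X != set0.
  by apply/negP => /eqP X0; move: sat; rewrite X0 cards0; lia.
have wI K : edges_within ends X (induced ends X K).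
  by apply/forallP => f; apply/implyP; rewrite inE => /andP[_ ->].
have sI K : induced ends X K \subset K.
  by apply/subsetP => f; rewrite inE => /andP[].
have U : induced ends X v.2.1 :|: induced ends X v.2.2 = induced ends X (assoc_edges u0).
  by rewrite -hA /assoc_edges; apply/setP => f; rewrite !inE andb_orl.
have D : [disjoint induced ends X v.2.1 & induced ends X v.2.2].
  exact: disjointWl (sI _) (disjointWr (sI _) dAB).
have cU : #|induced ends X v.2.1| + #|induced ends X v.2.2| =
          #|induced ends X (assoc_edges u0)|.
  by rewrite -U cardsU (disjoint_setI0 D) cards0 subn0.
have aA := acyclic_sub (sI v.2.1) acA.
have aB := acyclic_sub (sI v.2.2) acB.
have bA := acyclic_bound (leqnn _) X0 (wI v.2.1) aA.
have bB := acyclic_bound (leqnn _) X0 (wI v.2.2) aB.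
have eA : #|induced ends X v.2.1|.+1 = #|X| by lia.
have eB : #|induced ends X v.2.2|.+1 = #|X| by lia.
rewrite D andbT /is_tree_on X0 !wI aA aB /=.
by rewrite !acyclic_conn.
Qed.
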